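(* Let $(V,m)$ be a discrete measure space and $(b,c)$ a graph over $(V,m)$. The following are equivalent: (i) $Q^{(N)}\neq Q^{(D)}$, i.e. $D(Q^{(N)})/D(Q^{(D)})\neq\{0\}$; (ii) there exists $u\in D(Q^{(N)})$, $u\not\equiv0$, with $(\widetilde L+1)u=0$; (iii) there exists $u\in D(Q^{(N)})\cap\ell^\infty(V)$, $u\not\equiv0$, with $(\widetilde L+1)u=0$.
   Context: $V$ is a finite or countably infinite set and $m:V\to(0,\infty)$; $(V,m)$ is a discrete measure space. $C(V)$ is the set of all functions $V\to\mathbb C$, $C_c(V)$ the finitely supported ones, and $\ell^2(V,m)$ carries $\langle u,v\rangle=\sum_x u(x)\overline{v(x)}m(x)$. A graph over $(V,m)$ is a pair $(b,c)$ with $c:V\to[0,\infty)$, $b:V\times V\to[0,\infty)$, $b(x,x)=0$, $b(x,y)=b(y,x)$, $\sum_y b(x,y)<\infty$. Let $\widetilde F=\{u\in C(V):\sum_y|b(x,y)u(y)|<\infty\ \forall x\}$ and $\widetilde L u(x)=\frac{1}{m(x)}\sum_y b(x,y)(u(x)-u(y))+\frac{c(x)}{m(x)}u(x)$ for $u\in\widetilde F$. $Q^{(N)}$ is the form on $\ell^2(V,m)$ with domain $D(Q^{(N)})=\{u\in\ell^2(V,m):\frac12\sum_{x,y}b(x,y)|u(x)-u(y)|^2+\sum_x c(x)|u(x)|^2<\infty\}$ and $Q^{(N)}(u,v)=\frac12\sum_{x,y}b(x,y)(u(x)-u(y))\overline{(v(x)-v(y))}+\sum_x c(x)u(x)\overline{v(x)}$;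 it is non-negative, symmetric and closed, and $D(Q^{(N)})\subseteq\widetilde F$. $Q^{(D)}$ is the closure of the restriction of $Q^{(N)}$ to $C_c(V)$. *)

(* Defs.v *)
From Stdlib Require Import Reals List.
Import ListNotations.
Open Scope R_scope.

(** Complex numbers as pairs (real part, imaginary part). *)
Definition Cplx : Type := (R * R)%type.
Definition C0 : Cplx := (0, 0).
Definition Cnorm2 (z : Cplx) : R := fst z * fst z + snd z * snd z.
Definition Cabs (z : Cplx) : R := sqrt (Cnorm2 z).
Definition Csub (z w : Cplx) : Cplx := (fst z - fst w, snd z - snd w).

Definition fsum {T : Type} (f : T -> R) (l : list T) : R :=
  fold_right (fun x acc => f x + acc) 0 l.

(** Unconditional summation of a family indexed by an arbitrary type:
    the net of finite (duplicate-free) partial sums converges to s. *)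
Definition has_sum {T : Type} (f : T -> R) (s : R) : Prop :=
  forall eps, 0 < eps ->
    exists l0 : list T, NoDup l0 /\
      forall l : list T, NoDup l -> incl l0 l -> Rabs (fsum f l - s) < eps.

Definition summable {T : Type} (f : T -> R) : Prop := exists s, has_sum f s.

Section Graph.
Context {V : Type} (m : V -> R) (b : V -> V -> R) (c : V -> R).

Definition in_l2 (u : V -> Cplx) : Prop :=
  summable (fun x => Cnorm2 (u x) * m x).

(** the two pieces of the energy  (1/2)Σ b|u(x)-u(y)|^2 + Σ c|u|^2 *)
Definition edge_energy (u : V -> Cplx) : V * V -> R :=
  fun p => b (fst p) (snd p) * Cnorm2 (Csub (u (fst p)) (u (snd p))).
Definition pot_energy (u : V -> Cplx) : V -> R :=
  fun x => c x * Cnorm2 (u x).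

Definition DQN (u : V -> Cplx) : Prop :=
  in_l2 u /\ summable (edge_energy u) /\ summable (pot_energy u).

Definition formnorm2_lt (w : V -> Cplx) (eps : R) : Prop :=
  exists s1 s2 s3,
    has_sum (edge_energy w) s1 /\ has_sum (pot_energy w) s2 /\
    has_sum (fun x => Cnorm2 (w x) * m x) s3 /\
    (1/2) * s1 + s2 + s3 < eps.

Definition finsupp (phi : V -> Cplx) : Prop :=
  exists l : list V, forall x, ~ In x l -> phi x = C0.

Definition DQD (u : V -> Cplx) : Prop :=
  DQN u /\
  forall eps, 0 < eps ->
    exists phi, finsupp phi /\ formnorm2_lt (fun x => Csub (u x) (phi x)) eps.

Definition Ftilde (u : V -> Cplx) : Prop :=
  forall x, summable (fun y => Rabs (b x y) * Cabs (u y)).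

Definition Lt_plus1_zero (u : V -> Cplx) : Prop :=
  Ftilde u /\
  forall x, exists sr si,
    has_sum (fun y => b x y * (fst (u x) - fst (u y))) sr /\
    has_sum (fun y => b x y * (snd (u x) - snd (u y))) si /\
    (sr + c x * fst (u x)) / m x + fst (u x) = 0 /\
    (si + c x * snd (u x)) / m x + snd (u x) = 0.

Definition in_linfty (u : V -> Cplx) : Prop :=
  exists M, forall x, Cabs (u x) <= M.

Definition not_identically_zero (u : V -> Cplx) : Prop := exists x, u x <> C0.

End Graph.

(* Main.v *)
Require Import Defs.
From Stdlib Require Import Reals List.
Open Scope R_scope.
From Stdlib Require Import Reals Lra Psatz List Permutation.
From Stdlib Require Import Classical ClassicalEpsilon FunctionalExtensionality.
Import ListNotations.
Open Scope R_scope.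

Section Gen.
Context {T : Type}.

Lemma fsum_app (f : T -> R) l1 l2 : fsum f (l1 ++ l2) = fsum f l1 + fsum f l2.
Proof. induction l1; simpl; [lra| rewrite IHl1; lra]. Qed.

Lemma fsum_perm (f : T -> R) l1 l2 : Permutation l1 l2 -> fsum f l1 = fsum f l2.
Proof. induction 1; simpl; lra. Qed.

Lemma fsum_ext (f g : T -> R) l : (forall x, In x l -> f x = g x) -> fsum f l = fsum g l.
Proof. induction l; simpl; intros H; auto. rewrite H, IHl; auto. Qed.

Lemma fsum_plus (f g : T -> R) l : fsum (fun x => f x + g x) l = fsum f l + fsum g l.
Proof. induction l; simpl; lra. Qed.

Lemma fsum_scal k (f : T -> R) l : fsum (fun x => k * f x) l = k * fsum f l.
Proof. induction l; simpl; [lra|]. rewrite IHl; ring. Qed.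

Lemma fsum_nonneg (f : T -> R) l : (forall x, 0 <= f x) -> 0 <= fsum f l.
Proof. intros H; induction l; simpl; [lra|]. specialize (H a); lra. Qed.

Lemma fsum_le (f g : T -> R) l : (forall x, f x <= g x) -> fsum f l <= fsum g l.
Proof. intros H; induction l; simpl; [lra|]. specialize (H a); lra. Qed.

Lemma fsum_zero (f : T -> R) l : (forall x, In x l -> f x = 0) -> fsum f l = 0.
Proof. induction l; simpl; intros H; auto. rewrite H, IHl; auto; lra. Qed.

Lemma fsum_In_le (f : T -> R) l i : (forall x, 0 <= f x) -> In i l -> f i <= fsum f l.
Proof. intros H; induction l; simpl; [tauto|]. intros [<-|Hi].
  - pose proof (fsum_nonneg f l H); lra.
  - specialize (IHl Hi); specialize (H a); lra. Qed.

Lemma incl_perm (l l' : list T) : NoDup l -> NoDup l' -> incl l l' ->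
  exists r, Permutation l' (l ++ r).
Proof.
  revert l'; induction l as [|a l IH]; intros l' Hl Hl' Hinc.
  - exists l'; simpl; apply Permutation_refl.
  - assert (Ha : In a l') by (apply Hinc; simpl; auto).
    destruct (in_split _ _ Ha) as [l1 [l2 ->]].
    inversion Hl; subst.
    destruct (IH (l1 ++ l2)) as [r Hr]; auto.
    + eapply NoDup_remove_1; eauto.
    + intros x Hx. assert (Hx' : In x (l1 ++ a :: l2)) by (apply Hinc; simpl; auto).
      apply in_app_or in Hx'. apply in_or_app. simpl in Hx'.
      destruct Hx' as [H|[H|H]]; auto. subst; contradiction.
    + exists r. simpl. eapply perm_trans. apply Permutation_sym, Permutation_middle.
      apply perm_skip; auto.
Qed.

Lemma exists_nodup (l : list T) : exists l', NoDup l' /\ (forall x, In x l <-> In x l').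
Proof.
  induction l as [|a l [l' [H1 H2]]].
  - exists []; split; [constructor| simpl; tauto].
  - destruct (classic (In a l')) as [Hi|Hi].
    + exists l'; split; auto. intros x; simpl; split.
      * intros [<-|H]; auto. apply H2; auto.
      * intros H; right; apply H2; auto.
    + exists (a :: l'); split; [constructor; auto|]. intros x; simpl. rewrite H2; tauto.
Qed.

Lemma nodup_cover (l : list T) : exists l', NoDup l' /\ incl l l'.
Proof. destruct (exists_nodup l) as [l' [H1 H2]]. exists l'; split; auto. intros x; apply H2. Qed.

Lemma fsum_incl_le (f : T -> R) l l' : (forall x, 0 <= f x) -> NoDup l -> NoDup l' -> incl l l' ->
  fsum f l <= fsum f l'.
Proof.
  intros Hf H1 H2 H3. destruct (incl_perm l l' H1 H2 H3) as [r Hr].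
  rewrite (fsum_perm f _ _ Hr), fsum_app. pose proof (fsum_nonneg f r Hf); lra.
Qed.

Lemma has_sum_unique (f : T -> R) a b : has_sum f a -> has_sum f b -> a = b.
Proof.
  intros Ha Hb. destruct (Req_dec a b) as [|Hne]; auto. exfalso.
  set (e := Rabs (a - b) / 2).
  assert (He : 0 < e) by (unfold e; assert (0 < Rabs (a - b)) by (apply Rabs_pos_lt; intro; apply Hne; lra); lra).
  destruct (Ha e He) as [la [Hla Ha']]. destruct (Hb e He) as [lb [Hlb Hb']].
  destruct (nodup_cover (la ++ lb)) as [l [Hl Hinc]].
  assert (X1 := Ha' l Hl (fun x H => Hinc x (in_or_app _ _ _ (or_introl H)))).
  assert (X2 := Hb' l Hl (fun x H => Hinc x (in_or_app _ _ _ (or_intror H)))).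
  apply Rabs_def2 in X1; apply Rabs_def2 in X2.
  unfold e in *. destruct (Rle_lt_dec 0 (a - b)).
  - rewrite Rabs_right in * by lra. lra.
  - rewrite Rabs_left in * by lra. lra.
Qed.

Lemma has_sum_bound (f : T -> R) s l : (forall x, 0 <= f x) -> has_sum f s -> NoDup l -> fsum f l <= s.
Proof.
  intros Hf Hs Hl. apply Rnot_lt_le; intro Hlt.
  destruct (Hs (fsum f l - s)) as [l0 [Hl0 H0]]; [lra|].
  destruct (nodup_cover (l0 ++ l)) as [l' [Hl' Hinc]].
  assert (X := H0 l' Hl' (fun x H => Hinc x (in_or_app _ _ _ (or_introl H)))).
  assert (Y := fsum_incl_le f l l' Hf Hl Hl' (fun x H => Hinc x (in_or_app _ _ _ (or_intror H)))).
  apply Rabs_def2 in X. lra.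
Qed.

Lemma has_sum_le_bound (f : T -> R) s M : has_sum f s -> (forall l, NoDup l -> fsum f l <= M) -> s <= M.
Proof.
  intros Hs HM. apply Rnot_lt_le; intro Hlt.
  destruct (Hs (s - M)) as [l0 [Hl0 H0]]; [lra|].
  assert (X := H0 l0 Hl0 (incl_refl _)). apply Rabs_def2 in X. specialize (HM l0 Hl0). lra.
Qed.

Lemma nonneg_bounded (f : T -> R) M : (forall x, 0 <= f x) -> (forall l, NoDup l -> fsum f l <= M) ->
  exists s, has_sum f s /\ s <= M.
Proof.
  intros Hf HM.
  set (E := fun r => exists l, NoDup l /\ r = fsum f l).
  destruct (completeness E) as [s [Hub Hlub]].
  - exists M. intros r [l [Hl ->]]. auto.
  - exists 0, []. split; [constructor|reflexivity].
  - exists s. split.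
    + intros eps He.
      assert (exists l0, NoDup l0 /\ s - eps < fsum f l0) as [l0 [Hl0 Hlt]].
      { apply NNPP; intro Hn. assert (s <= s - eps); [|lra].
        apply Hlub. intros r [l [Hl ->]]. apply Rnot_lt_le; intro. apply Hn. exists l; auto. }
      exists l0; split; auto. intros l Hl Hinc.
      assert (fsum f l <= s) by (apply Hub; exists l; auto).
      assert (fsum f l0 <= fsum f l) by (apply fsum_incl_le; auto).
      apply Rabs_def1; lra.
    + apply Hlub. intros r [l [Hl ->]]. auto.
Qed.

Lemma has_sum_ext (f g : T -> R) s : (forall x, f x = g x) -> has_sum f s -> has_sum g s.
Proof. intros H. replace g with f; auto. apply functional_extensionality; auto. Qed.

Lemma has_sum_plus (f g : T -> R) a b : has_sum f a -> has_sum g b -> has_sum (fun x => f x + g x) (a + b).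
Proof.
  intros Ha Hb eps He.
  destruct (Ha (eps/2)) as [la [Hla Ha']]; [lra|]. destruct (Hb (eps/2)) as [lb [Hlb Hb']]; [lra|].
  destruct (nodup_cover (la ++ lb)) as [l0 [Hl0 Hinc]].
  exists l0; split; auto. intros l Hl Hi.
  assert (X1 := Ha' l Hl (fun x H => Hi x (Hinc x (in_or_app _ _ _ (or_introl H))))).
  assert (X2 := Hb' l Hl (fun x H => Hi x (Hinc x (in_or_app _ _ _ (or_intror H))))).
  rewrite fsum_plus. apply Rabs_def2 in X1; apply Rabs_def2 in X2. apply Rabs_def1; lra.
Qed.

Lemma has_sum_scal (f : T -> R) k s : has_sum f s -> has_sum (fun x => k * f x) (k * s).
Proof.
  intros Hs eps He.
  assert (Hk : 0 < Rabs k + 1) by (pose proof (Rabs_pos k); lra).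
  destruct (Hs (eps / (Rabs k + 1))) as [l0 [Hl0 H0]]; [apply Rdiv_lt_0_compat; lra|].
  exists l0; split; auto. intros l Hl Hi. rewrite fsum_scal.
  replace (k * fsum f l - k * s) with (k * (fsum f l - s)) by ring. rewrite Rabs_mult.
  specialize (H0 l Hl Hi).
  apply Rle_lt_trans with (Rabs k * (eps / (Rabs k + 1))).
  - apply Rmult_le_compat_l; [apply Rabs_pos| lra].
  - assert (eps / (Rabs k + 1) * (Rabs k + 1) = eps) by (field; lra).
    pose proof (Rabs_pos k). nra.
Qed.

Lemma has_sum_le (f g : T -> R) a b : (forall x, f x <= g x) -> has_sum f a -> has_sum g b -> a <= b.
Proof.
  intros H Ha Hb. apply Rnot_lt_le; intro Hlt.
  destruct (Ha ((a-b)/2)) as [la [Hla Ha']]; [lra|]. destruct (Hb ((a-b)/2)) as [lb [Hlb Hb']]; [lra|].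
  destruct (nodup_cover (la ++ lb)) as [l [Hl Hinc]].
  assert (X1 := Ha' l Hl (fun x H => Hinc x (in_or_app _ _ _ (or_introl H)))).
  assert (X2 := Hb' l Hl (fun x H => Hinc x (in_or_app _ _ _ (or_intror H)))).
  apply Rabs_def2 in X1; apply Rabs_def2 in X2. pose proof (fsum_le f g l H). lra.
Qed.

Lemma nodup_app_disj (l r : list T) x : NoDup (l ++ r) -> In x r -> In x l -> False.
Proof. induction l; simpl; auto. intros Hn Hr [<-|Hl].
  - inversion Hn; subst. apply H1. apply in_or_app; auto.
  - inversion Hn; subst. eauto. Qed.

Lemma has_sum_fin (f : T -> R) l : NoDup l -> (forall x, ~ In x l -> f x = 0) -> has_sum f (fsum f l).
Proof.
  intros Hl Hz eps He. exists l; split; auto. intros l' Hl' Hi.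
  destruct (incl_perm l l' Hl Hl' Hi) as [r Hr].
  rewrite (fsum_perm f _ _ Hr), fsum_app.
  assert (fsum f r = 0).
  { apply fsum_zero. intros x Hx. apply Hz. intro Hxl.
    assert (Hnd : NoDup (l ++ r)) by (eapply Permutation_NoDup; eauto).
    eapply nodup_app_disj; eauto. }
  rewrite H. replace (fsum f l + 0 - fsum f l) with 0 by ring. rewrite Rabs_R0; lra.
Qed.

End Gen.

From Stdlib Require Import Reals Lra Psatz List Permutation.
From Stdlib Require Import Classical ClassicalEpsilon FunctionalExtensionality.
Import ListNotations.
Open Scope R_scope.

Section Reindex.
Context {A T : Type} (e : A -> T) (einj : forall x y, e x = e y -> x = y).

Definition preim (y : T) : list A :=
  match excluded_middle_informative (exists x, e x = y) with
  | left H => [proj1_sig (constructive_indefinite_description _ H)]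
  | right _ => []
  end.

Definition pre (l : list T) : list A := flat_map preim l.

Lemma preim_spec y x : In x (preim y) -> e x = y.
Proof. unfold preim. destruct excluded_middle_informative as [H|H]; simpl; [|tauto].
  intros [<-|[]]. destruct constructive_indefinite_description; simpl; auto. Qed.

Lemma pre_spec l x : In x (pre l) -> In (e x) l.
Proof. unfold pre. intros H. apply in_flat_map in H as [y [Hy Hx]].
  apply preim_spec in Hx. subst; auto. Qed.

Lemma pre_in l x : In (e x) l -> In x (pre l).
Proof. intros H. unfold pre. apply in_flat_map. exists (e x); split; auto.
  unfold preim. destruct excluded_middle_informative as [H'|H'].
  - destruct constructive_indefinite_description as [x' Hx']; simpl. left; auto.
  - exfalso; apply H'; eauto. Qed.

Lemma pre_nodup l : NoDup l -> NoDup (pre l).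
Proof.
  induction l as [|y l IH]; intros Hl; simpl; [constructor|].
  inversion Hl; subst. unfold pre; simpl. fold (pre l).
  unfold preim at 1. destruct excluded_middle_informative as [H|H]; simpl; [|auto].
  destruct constructive_indefinite_description as [x Hx]; simpl. constructor; auto.
  intro Hin. apply pre_spec in Hin. subst; auto.
Qed.

Lemma fsum_pre (F : T -> R) l : (forall y, ~ (exists x, e x = y) -> F y = 0) ->
  fsum (fun x => F (e x)) (pre l) = fsum F l.
Proof.
  intros HF. induction l as [|y l IH]; simpl; auto.
  unfold pre; simpl. fold (pre l). rewrite fsum_app, IH.
  unfold preim. destruct excluded_middle_informative as [H|H]; simpl.
  - destruct constructive_indefinite_description as [x Hx]; simpl. subst; ring.
  - rewrite HF; auto; ring.
Qed.

Lemma fsum_map (F : T -> R) l : fsum F (map e l) = fsum (fun x => F (e x)) l.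
Proof. induction l; simpl; auto. rewrite IHl; auto. Qed.

Lemma has_sum_reindex (F : T -> R) s : (forall y, ~ (exists x, e x = y) -> F y = 0) ->
  has_sum (fun x => F (e x)) s -> has_sum F s.
Proof.
  intros HF Hs eps He. destruct (Hs eps He) as [la [Hla H]].
  exists (map e la). split.
  - apply FinFun.Injective_map_NoDup; auto.
  - intros l Hl Hi. rewrite <- fsum_pre by auto. apply H.
    + apply pre_nodup; auto.
    + intros x Hx. apply pre_in. apply Hi. apply in_map; auto.
Qed.

Lemma summable_restrict (F : T -> R) : (forall y, 0 <= F y) -> summable F -> summable (fun x => F (e x)).
Proof.
  intros Hp [s Hs]. destruct (nonneg_bounded (fun x => F (e x)) s) as [s' [H _]].
  - intros; auto.
  - intros l Hl. rewrite <- fsum_map. apply has_sum_bound; auto.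
    apply FinFun.Injective_map_NoDup; auto.
  - exists s'; auto.
Qed.
End Reindex.

Section Gen2.
Context {T : Type}.

Lemma has_sum_zero : has_sum (fun _ : T => 0) 0.
Proof. apply (has_sum_fin (fun _ : T => 0) []); [constructor| auto]. Qed.

Lemma has_sum_minus (f g : T -> R) a b : has_sum f a -> has_sum g b -> has_sum (fun x => f x - g x) (a - b).
Proof. intros Ha Hb. apply (has_sum_scal g (-1)) in Hb.
  apply (has_sum_ext _ _ _ (fun x => ltac:(ring) : f x + -1 * g x = f x - g x)).
  replace (a - b) with (a + -1 * b) by ring. apply has_sum_plus; auto. Qed.

Lemma summable_nonneg_dom (f g : T -> R) : (forall x, 0 <= g x <= f x) -> summable f -> summable g.
Proof.
  intros H [s Hs]. destruct (nonneg_bounded g s) as [s' [Hs' _]].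
  - intros x; apply H.
  - intros l Hl. apply Rle_trans with (fsum f l). apply fsum_le; apply H.
    apply has_sum_bound; auto. intros x; specialize (H x); lra.
  - exists s'; auto.
Qed.

Lemma summable_dom (f g : T -> R) : (forall x, Rabs (g x) <= f x) -> summable f -> summable g.
Proof.
  intros H Hf.
  destruct (summable_nonneg_dom f (fun x => Rmax (g x) 0)) as [a Ha]; auto.
  { intros x; specialize (H x). revert H. unfold Rmax; destruct Rle_dec; split_Rabs; lra. }
  destruct (summable_nonneg_dom f (fun x => Rmax (- g x) 0)) as [b' Hb]; auto.
  { intros x; specialize (H x). revert H. unfold Rmax; destruct Rle_dec; split_Rabs; lra. }
  exists (a - b'). eapply has_sum_ext; [|apply has_sum_minus; [exact Ha|exact Hb]].
  intros x; simpl. unfold Rmax. repeat destruct Rle_dec; lra.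
Qed.

Lemma summable_plus (f g : T -> R) : summable f -> summable g -> summable (fun x => f x + g x).
Proof. intros [a Ha] [b Hb]; exists (a+b); apply has_sum_plus; auto. Qed.
Lemma summable_scal (f : T -> R) k : summable f -> summable (fun x => k * f x).
Proof. intros [a Ha]; exists (k*a); apply has_sum_scal; auto. Qed.

Definition sumv (f : T -> R) : R :=
  match excluded_middle_informative (summable f) with
  | left H => proj1_sig (constructive_indefinite_description _ H)
  | right _ => 0 end.

Lemma sumv_spec f : summable f -> has_sum f (sumv f).
Proof. intros H. unfold sumv. destruct excluded_middle_informative; [|contradiction].
  destruct constructive_indefinite_description; simpl; auto. Qed.

Lemma sumv_eq f s : has_sum f s -> sumv f = s.
Proof. intros H. eapply has_sum_unique; [apply sumv_spec; exists s|]; eauto. Qed.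

Lemma sumv_nonneg f : (forall x, 0 <= f x) -> 0 <= sumv f.
Proof. intros H. unfold sumv. destruct excluded_middle_informative as [Hs|]; [|lra].
  destruct constructive_indefinite_description as [s Hs']; simpl.
  eapply has_sum_le; [|apply has_sum_zero|exact Hs']. auto. Qed.

Lemma sumv_plus f g : summable f -> summable g -> sumv (fun x => f x + g x) = sumv f + sumv g.
Proof. intros Hf Hg. apply sumv_eq, has_sum_plus; apply sumv_spec; auto. Qed.
Lemma sumv_scal f k : summable f -> sumv (fun x => k * f x) = k * sumv f.
Proof. intros Hf. apply sumv_eq, has_sum_scal; apply sumv_spec; auto. Qed.

Lemma sumv_le f g : summable f -> summable g -> (forall x, f x <= g x) -> sumv f <= sumv g.
Proof. intros Hf Hg H. eapply has_sum_le; eauto; apply sumv_spec; auto. Qed.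

Lemma sumv_fsum_le f l : (forall x, 0 <= f x) -> summable f -> NoDup l -> fsum f l <= sumv f.
Proof. intros; apply has_sum_bound; auto; apply sumv_spec; auto. Qed.

Definition L2 (F : T -> R) := summable (fun i => F i * F i).
Definition ip (F G : T -> R) := sumv (fun i => F i * G i).

Lemma prod_summable F G : L2 F -> L2 G -> summable (fun i => F i * G i).
Proof. intros HF HG. apply summable_dom with (fun i => (F i * F i + G i * G i) / 2).
  - intros i. apply Rabs_le. pose proof (Rle_0_sqr (F i + G i)); pose proof (Rle_0_sqr (F i - G i)); unfold Rsqr in *; split; lra.
  - apply (summable_scal _ (/2)) in HF. apply (summable_scal _ (/2)) in HG.
    destruct (summable_plus _ _ HF HG) as [s Hs]. exists s. eapply has_sum_ext; [|exact Hs].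
    intros; simpl; field. Qed.

Lemma L2_lin F G p q : L2 F -> L2 G -> L2 (fun i => p * F i + q * G i).
Proof. intros HF HG. pose proof (prod_summable F G HF HG) as HFG.
  apply (summable_scal _ (p*p)) in HF. apply (summable_scal _ (q*q)) in HG.
  apply (summable_scal _ (2*p*q)) in HFG.
  destruct (summable_plus _ _ (summable_plus _ _ HF HG) HFG) as [s Hs]. exists s.
  eapply has_sum_ext; [|exact Hs]. intros; simpl; ring. Qed.

Lemma L2_zero : L2 (fun _ => 0).
Proof. exists 0. eapply has_sum_ext; [|apply has_sum_zero]. intros; simpl; ring. Qed.

Lemma ip_comm F G : ip F G = ip G F.
Proof. unfold ip. f_equal. apply functional_extensionality; intros; ring. Qed.

Lemma ip_lin_l F G H p q : L2 F -> L2 G -> L2 H ->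
  ip (fun i => p * F i + q * G i) H = p * ip F H + q * ip G H.
Proof. intros HF HG HH. unfold ip.
  rewrite <- (sumv_scal _ p), <- (sumv_scal _ q), <- sumv_plus.
  - f_equal. apply functional_extensionality; intros; ring.
  - apply summable_scal, prod_summable; auto.
  - apply summable_scal, prod_summable; auto.
  - apply prod_summable; auto.
  - apply prod_summable; auto. Qed.

Lemma ip_lin_r F G H p q : L2 F -> L2 G -> L2 H ->
  ip H (fun i => p * F i + q * G i) = p * ip H F + q * ip H G.
Proof. intros. rewrite ip_comm, ip_lin_l by auto. rewrite (ip_comm F), (ip_comm G); auto. Qed.

Lemma ip_nonneg F : 0 <= ip F F.
Proof. apply sumv_nonneg. intros; nra. Qed.

Lemma quad_disc A B p : 0 <= B -> (forall t, 0 <= A - 2 * t * p + t * t * B) -> p * p <= A * B.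
Proof.
  intros HB H. assert (HA := H 0).
  destruct (Req_dec B 0) as [HB0|HB0].
  - subst. destruct (Req_dec p 0). subst; lra.
    specialize (H ((A + 1) / (2 * p))).
    assert (2 * ((A + 1) / (2 * p)) * p = A + 1) by (field; auto). nra.
  - specialize (H (p / B)). assert (2 * (p/B) * p = 2 * (p * p / B)) by (field; lra).
    assert (p / B * (p / B) * B = p * p / B) by (field; lra).
    assert (p * p / B <= A) by lra.
    apply (Rmult_le_compat_r B) in H2; [|lra]. replace (p * p / B * B) with (p*p) in H2 by (field; lra). lra.
Qed.

Lemma ip_expand F G t : L2 F -> L2 G ->
  ip (fun i => F i - t * G i) (fun i => F i - t * G i) = ip F F - 2 * t * ip F G + t * t * ip G G.
Proof. intros HF HG.
  assert (E : (fun i => F i - t * G i) = (fun i => 1 * F i + (-t) * G i)) by (apply functional_extensionality; intros; ring).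
  rewrite E. assert (L : L2 (fun i => 1 * F i + (-t) * G i)) by (apply L2_lin; auto).
  rewrite ip_lin_l by auto. rewrite !ip_lin_r by auto. rewrite (ip_comm G F). ring. Qed.

Lemma cauchy_schwarz F G : L2 F -> L2 G -> ip F G * ip F G <= ip F F * ip G G.
Proof. intros HF HG. apply quad_disc. apply ip_nonneg. intros t. rewrite <- ip_expand by auto. apply ip_nonneg. Qed.

Lemma ip_sum_le F G : L2 F -> L2 G ->
  ip (fun i => F i + G i) (fun i => F i + G i) <= 2 * ip F F + 2 * ip G G.
Proof. intros HF HG.
  assert (E : (fun i => F i + G i) = (fun i => 1 * F i + 1 * G i)) by (apply functional_extensionality; intros; ring).
  rewrite E. assert (L : L2 (fun i => 1 * F i + 1 * G i)) by (apply L2_lin; auto).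
  rewrite ip_lin_l by auto. rewrite !ip_lin_r by auto. rewrite (ip_comm G F).
  pose proof (ip_expand F G 1 HF HG). pose proof (ip_nonneg (fun i => F i - 1 * G i)). lra. Qed.

Lemma fsum_cv (Fk : nat -> T -> R) G l : (forall i, Un_cv (fun k => Fk k i) (G i)) ->
  Un_cv (fun k => fsum (fun i => Fk k i * Fk k i) l) (fsum (fun i => G i * G i) l).
Proof. intros H. induction l as [|a l IH]; simpl.
  - intros eps He. exists 0%nat. intros. unfold R_dist. rewrite Rminus_diag, Rabs_R0; lra.
  - apply CV_plus; auto. apply CV_mult; auto. Qed.

Lemma fatou (Fk : nat -> T -> R) G M Mk : (forall k, L2 (Fk k)) -> (forall i, Un_cv (fun k => Fk k i) (G i)) ->
  (forall k, ip (Fk k) (Fk k) <= Mk k) -> Un_cv Mk M -> L2 G /\ ip G G <= M.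
Proof.
  intros HL Hcv Hb HM.
  assert (Hfs : forall l, NoDup l -> fsum (fun i => G i * G i) l <= M).
  { intros l Hl. eapply Rle_cv_lim; [|apply fsum_cv; exact Hcv|exact HM].
    intros k. eapply Rle_trans; [|apply Hb]. apply sumv_fsum_le; [intros; nra| apply HL | exact Hl]. }
  destruct (nonneg_bounded _ M (fun i => (Rle_0_sqr (G i) : 0 <= G i * G i)) Hfs) as [s [Hs Hle]].
  split. exists s; auto. unfold ip. rewrite (sumv_eq _ _ Hs); auto.
Qed.

End Gen2.

From Stdlib Require Import Lia.
From Stdlib Require Import Reals Lra Psatz List Permutation.
From Stdlib Require Import Classical ClassicalEpsilon FunctionalExtensionality.
Import ListNotations.
Open Scope R_scope.

Section SumType.
Context {A B : Type}.

Lemma has_sum_sumtype (F : A + B -> R) a b :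
  has_sum (fun p => F (inl p)) a -> has_sum (fun x => F (inr x)) b -> has_sum F (a + b).
Proof.
  intros Ha Hb.
  set (F1 := fun i : A + B => match i with inl p => F (inl p) | inr _ => 0 end).
  set (F2 := fun i : A + B => match i with inl _ => 0 | inr x => F (inr x) end).
  assert (H1 : has_sum F1 a).
  { apply (has_sum_reindex inl). intros x y H; injection H; auto.
    intros [p|x] Hn; simpl; auto. exfalso; apply Hn; eauto. exact Ha. }
  assert (H2 : has_sum F2 b).
  { apply (has_sum_reindex inr). intros x y H; injection H; auto.
    intros [p|x] Hn; simpl; auto. exfalso; apply Hn; eauto. exact Hb. }
  eapply has_sum_ext; [|apply has_sum_plus; [exact H1|exact H2]].
  intros [p|x]; simpl; ring.
Qed.

Lemma has_sum_split (F : A + B -> R) s : (forall i, 0 <= F i) -> has_sum F s ->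
  exists a b, has_sum (fun p => F (inl p)) a /\ has_sum (fun x => F (inr x)) b /\ a + b = s.
Proof.
  intros Hp Hs.
  destruct (summable_restrict inl (fun x y H => ltac:(injection H; auto)) F Hp (ex_intro _ s Hs)) as [a Ha].
  destruct (summable_restrict inr (fun x y H => ltac:(injection H; auto)) F Hp (ex_intro _ s Hs)) as [b Hb].
  exists a, b; split; auto; split; auto. eapply has_sum_unique; [|exact Hs]. apply has_sum_sumtype; auto.
Qed.
End SumType.

Definition ceq {T : Type} (x y : T) : {x = y} + {x <> y} := excluded_middle_informative (x = y).

Lemma sqrt_mul_sq B u v : 0 <= B -> sqrt B * u * (sqrt B * v) = B * u * v.
Proof. intros H. replace (sqrt B * u * (sqrt B * v)) with (sqrt B * sqrt B * u * v) by ring.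
  rewrite sqrt_sqrt; auto. Qed.

Definition clip (n a : R) : R := Rmax (-n) (Rmin n a).

Ltac cliptac := unfold clip, Rmax, Rmin; repeat destruct Rle_dec; nra.

Lemma clip_mono n a b : b <= a -> 0 <= clip n a - clip n b <= a - b.
Proof. intros; unfold clip, Rmax, Rmin; repeat destruct Rle_dec; split; lra. Qed.


Lemma clip_lip n a b : 0 <= n -> (clip n a - clip n b) * (clip n a - clip n b) <= (a - b) * (a - b).
Proof. intros _. destruct (Rle_dec b a).
  - pose proof (clip_mono n a b r). nra.
  - pose proof (clip_mono n b a ltac:(lra)). nra. Qed.

Lemma clip_sq n a : 0 <= n -> clip n a * clip n a <= a * a.
Proof. intros; cliptac. Qed.
Lemma clip_id n a : -n <= a <= n -> clip n a = a.
Proof. intros; cliptac. Qed.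
Lemma clip_bd n a : 0 <= n -> -n <= clip n a <= n.
Proof. intros; split; cliptac. Qed.
Lemma rest_lip n a b : 0 <= n -> ((a - clip n a) - (b - clip n b)) * ((a - clip n a) - (b - clip n b)) <= (a - b) * (a - b).
Proof. intros _. destruct (Rle_dec b a).
  - pose proof (clip_mono n a b r). nra.
  - pose proof (clip_mono n b a ltac:(lra)). nra. Qed.
Lemma rest_sq n a : 0 <= n -> (a - clip n a) * (a - clip n a) <= a * a.
Proof. intros; cliptac. Qed.

Definition epsk (k : nat) : R := / INR (S k).
Lemma epsk_pos k : 0 < epsk k.
Proof. unfold epsk; apply Rinv_0_lt_compat, lt_0_INR; lia. Qed.
Lemma epsk_mono j k : (j <= k)%nat -> epsk k <= epsk j.
Proof. intros; unfold epsk; apply Rinv_le_contravar; [apply lt_0_INR; lia| apply le_INR; lia]. Qed.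
Lemma epsk_small d : 0 < d -> exists N, forall k, (N <= k)%nat -> epsk k < d.
Proof. intros H. destruct (archimed_cor1 d H) as [N [H1 H2]]. exists N. intros k Hk.
  eapply Rle_lt_trans; [|exact H1]. unfold epsk. apply Rinv_le_contravar; [apply lt_0_INR; lia| apply le_INR; lia]. Qed.
Lemma epsk_cv : Un_cv epsk 0.
Proof. intros e He. destruct (epsk_small e He) as [N HN]. exists N. intros k Hk. unfold R_dist.
  rewrite Rminus_0_r, Rabs_right by (left; apply epsk_pos). apply HN; lia. Qed.

Lemma cv_const a : Un_cv (fun _ => a) a.
Proof. intros e He. exists 0%nat. intros. unfold R_dist. rewrite Rminus_diag, Rabs_R0; lra. Qed.
Lemma cv_scal K u l : Un_cv u l -> Un_cv (fun k => K * u k) (K * l).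
Proof. intros H. apply (CV_mult (fun _ => K) u); auto. apply cv_const. Qed.

Section Graph.
Context {V : Type} (m : V -> R) (b : V -> V -> R) (c : V -> R).
Hypothesis Hm : forall x, 0 < m x.
Hypothesis Hc : forall x, 0 <= c x.
Hypothesis Hbn : forall x y, 0 <= b x y.
Hypothesis Hbd : forall x, b x x = 0.
Hypothesis Hbs : forall x y, b x y = b y x.
Hypothesis Hbsum : forall x, summable (b x).

Definition Tm (f : V -> R) (i : (V * V) + V) : R :=
  match i with
  | inl p => sqrt (b (fst p) (snd p) / 2) * (f (fst p) - f (snd p))
  | inr x => sqrt (c x + m x) * f x
  end.

Definition DR f := L2 (Tm f).
Definition NR f := ip (Tm f) (Tm f).
Definition finsR (phi : V -> R) := exists l, forall x, ~ In x l -> phi x = 0.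
Definition dl (a : V) : V -> R := fun x => if ceq x a then 1 else 0.

Lemma B2 x y : 0 <= b x y / 2.
Proof. specialize (Hbn x y); lra. Qed.
Lemma CM x : 0 <= c x + m x.
Proof. specialize (Hc x); specialize (Hm x); lra. Qed.

Lemma Tm_lin f g p q : Tm (fun x => p * f x + q * g x) = fun i => p * Tm f i + q * Tm g i.
Proof. apply functional_extensionality; intros [[x y]|x]; simpl; ring. Qed.

Lemma Tm_ext f g : (forall x, f x = g x) -> Tm f = Tm g.
Proof. intros H. replace g with f; auto. apply functional_extensionality; auto. Qed.

Lemma DR_lin f g p q : DR f -> DR g -> DR (fun x => p * f x + q * g x).
Proof. unfold DR; intros; rewrite Tm_lin; apply L2_lin; auto. Qed.

Lemma DR_minus f g : DR f -> DR g -> DR (fun x => f x - g x).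
Proof. intros. unfold DR. rewrite (Tm_ext _ (fun x => 1 * f x + (-1) * g x)) by (intros; ring).
  apply DR_lin; auto. Qed.

Lemma ip_delta f a s : has_sum (fun y => b a y * (f a - f y)) s ->
  has_sum (fun i => Tm f i * Tm (dl a) i) (s + (c a + m a) * f a).
Proof.
  intros Hs. set (h := fun y => / 2 * (b a y * (f a - f y))).
  assert (Hh : has_sum h (/2 * s)) by (apply has_sum_scal; auto).
  set (P1 := fun i : (V*V)+V => match i with inl p => if ceq (fst p) a then h (snd p) else 0 | inr _ => 0 end).
  set (P2 := fun i : (V*V)+V => match i with inl p => if ceq (snd p) a then h (fst p) else 0 | inr _ => 0 end).
  set (P3 := fun i : (V*V)+V => match i with inl p => 0 | inr x => if ceq x a then (c a + m a) * f a else 0 end).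
  assert (H1 : has_sum P1 (/2 * s)).
  { apply (has_sum_reindex (fun y => inl (a, y))).
    - intros x y H; injection H; auto.
    - intros [[x y]|x] Hn; simpl; auto. destruct (ceq x a); auto. subst. exfalso; apply Hn; eauto.
    - eapply has_sum_ext; [|exact Hh]. intros y; simpl. destruct (ceq a a); tauto. }
  assert (H2 : has_sum P2 (/2 * s)).
  { apply (has_sum_reindex (fun x => inl (x, a))).
    - intros x y H; injection H; auto.
    - intros [[x y]|x] Hn; simpl; auto. destruct (ceq y a); auto. subst. exfalso; apply Hn; eauto.
    - eapply has_sum_ext; [|exact Hh]. intros y; simpl. destruct (ceq a a); tauto. }
  assert (H3 : has_sum P3 ((c a + m a) * f a)).
  { replace ((c a + m a) * f a) with (fsum P3 [inr a]).
    - apply has_sum_fin. repeat constructor; simpl; tauto.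
      intros [p|x] Hn; simpl; auto. destruct (ceq x a); auto. subst. exfalso; apply Hn; simpl; auto.
    - simpl. destruct (ceq a a); [ring|tauto]. }
  replace (s + (c a + m a) * f a) with (/2 * s + /2 * s + (c a + m a) * f a) by field.
  eapply has_sum_ext; [|apply has_sum_plus; [apply has_sum_plus; [exact H1|exact H2]|exact H3]].
  intros [[x y]|x]; simpl.
  - unfold dl, h. rewrite sqrt_mul_sq by apply B2.
    destruct (ceq x a) as [->|Hx]; destruct (ceq y a) as [->|Hy].
    + rewrite Hbd; field.
    + field.
    + rewrite (Hbs x a); field.
    + field.
  - unfold dl. rewrite sqrt_mul_sq by apply CM. destruct (ceq x a) as [->|]; field.
Qed.

Lemma DR_dl a : DR (dl a).
Proof.
  destruct (summable_dom (b a) (fun y => b a y * (dl a a - dl a y))) as [s Hs]; auto.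
  { intros y. unfold dl. destruct (ceq a a); [|tauto]. destruct (ceq y a); specialize (Hbn a y);
    [rewrite Rminus_diag, Rmult_0_r, Rabs_R0; lra| rewrite Rminus_0_r, Rmult_1_r, Rabs_right; lra]. }
  exists (s + (c a + m a) * dl a a). apply ip_delta; auto.
Qed.

Lemma finsR_decomp (phi : V -> R) a : phi = (fun x => phi a * dl a x + 1 * (if ceq x a then 0 else phi x)).
Proof. apply functional_extensionality; intros x. unfold dl. destruct (ceq x a) as [->|]; ring. Qed.

Lemma Tm_zero : Tm (fun _ => 0) = (fun _ => 0).
Proof. apply functional_extensionality; intros [[x y]|x]; simpl; ring. Qed.

Lemma DR_zero : DR (fun _ => 0).
Proof. unfold DR. rewrite Tm_zero. apply L2_zero. Qed.

Lemma fins_ind (P : (V -> R) -> Prop) :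
  P (fun _ => 0) -> (forall phi a, finsR (fun x => if ceq x a then 0 else phi x) ->
     P (fun x => if ceq x a then 0 else phi x) -> P phi) ->
  forall phi, finsR phi -> P phi.
Proof.
  intros H0 HS phi [l Hl]. revert phi Hl. induction l as [|a l IH]; intros phi Hl.
  - replace phi with (fun _ : V => 0); auto. apply functional_extensionality; intros x; symmetry; apply Hl; simpl; auto.
  - assert (Hl' : forall x, ~ In x l -> (if ceq x a then 0 else phi x) = 0).
    { intros x Hx. destruct (ceq x a); auto. apply Hl. simpl. intros [->|H]; auto. }
    apply (HS phi a). exists l; auto. apply IH. auto.
Qed.

Lemma DR_fins phi : finsR phi -> DR phi.
Proof.
  revert phi. apply fins_ind. apply DR_zero. intros phi a Hfs H. rewrite (finsR_decomp phi a).
  apply DR_lin; auto. apply DR_dl.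
Qed.

Lemma ip_zero_r (F : (V*V)+V -> R) : ip F (fun _ => 0) = 0.
Proof. unfold ip. apply sumv_eq. eapply has_sum_ext; [|apply has_sum_zero].
    intros; simpl; ring. Qed.

Lemma green f : DR f ->
  (forall x, exists s, has_sum (fun y => b x y * (f x - f y)) s /\ (s + c x * f x) / m x + f x = 0) ->
  forall phi, finsR phi -> ip (Tm f) (Tm phi) = 0.
Proof.
  intros Hf Heq. apply fins_ind.
  - rewrite Tm_zero. apply ip_zero_r.
  - intros phi a Hfs H. rewrite (finsR_decomp phi a), Tm_lin, ip_lin_r; auto.
    + rewrite H. destruct (Heq a) as [s [Hs He]].
      unfold ip at 1; rewrite (sumv_eq _ _ (ip_delta f a s Hs)).
      assert (s + (c a + m a) * f a = m a * ((s + c a * f a) / m a + f a)) by (field; specialize (Hm a); lra).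
      rewrite H0, He. ring.
    + apply DR_dl.
    + apply DR_fins; auto.
Qed.

Lemma NR_point g x : DR g -> m x * (g x * g x) <= NR g.
Proof.
  intros Hg. unfold NR, ip. eapply Rle_trans; [|apply (sumv_fsum_le _ [inr x])].
  - simpl. rewrite sqrt_mul_sq by apply CM. specialize (Hc x). pose proof (Rle_0_sqr (g x)); unfold Rsqr in *. nra.
  - intros; apply Rle_0_sqr.
  - exact Hg.
  - repeat constructor; simpl; tauto.
Qed.

Lemma zero_real f : DR f ->
  (forall x, exists s, has_sum (fun y => b x y * (f x - f y)) s /\ (s + c x * f x) / m x + f x = 0) ->
  (forall eps, 0 < eps -> exists phi, finsR phi /\ NR (fun x => f x - phi x) < eps) ->
  forall x, f x = 0.
Proof.
  intros Hf Heq Hap.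
  assert (HN : NR f = 0).
  { pose proof (ip_nonneg (Tm f)). fold (NR f) in H.
    destruct (Req_dec (NR f) 0) as [|Hne]; auto. exfalso.
    destruct (Hap (NR f / 2)) as [phi [Hphi Hlt]]; [lra|].
    assert (Hd : DR phi) by (apply DR_fins; auto).
    assert (E : NR f = ip (Tm f) (Tm (fun x => f x - phi x))).
    { rewrite (Tm_ext (fun x => f x - phi x) (fun x => 1 * f x + (-1) * phi x)) by (intros; ring).
      rewrite Tm_lin, ip_lin_r; auto. rewrite (green f Hf Heq phi Hphi). unfold NR; ring. }
    pose proof (cauchy_schwarz (Tm f) (Tm (fun x => f x - phi x)) Hf (DR_minus _ _ Hf Hd)).
    rewrite <- E in H0. fold (NR f) in H0. fold (NR (fun x => f x - phi x)) in H0.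
    assert (0 < NR f) by lra. nra. }
  intros x. pose proof (NR_point f x Hf). rewrite HN in H. specialize (Hm x).
  pose proof (Rle_0_sqr (f x)); unfold Rsqr in *.
  assert (f x * f x = 0) by nra. nra.
Qed.


Lemma cpx_part (w : V -> Cplx) s1 s2 s3 (g : V -> R) :
  (forall x, g x * g x <= Cnorm2 (w x)) ->
  (forall x y, (g x - g y) * (g x - g y) <= Cnorm2 (Csub (w x) (w y))) ->
  has_sum (edge_energy b w) s1 -> has_sum (pot_energy c w) s2 ->
  has_sum (fun x => Cnorm2 (w x) * m x) s3 -> DR g /\ NR g <= 1/2 * s1 + s2 + s3.
Proof.
  intros H1 H2 E1 E2 E3.
  set (H := fun i : (V*V)+V => match i with inl p => /2 * edge_energy b w p | inr x => pot_energy c w x + Cnorm2 (w x) * m x end).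
  assert (HH : has_sum H (/2 * s1 + (s2 + s3))).
  { apply has_sum_sumtype. apply has_sum_scal; auto. apply has_sum_plus; auto. }
  assert (Hdom : forall i, 0 <= Tm g i * Tm g i <= H i).
  { intros [[x y]|x]; simpl; split; try apply Rle_0_sqr.
    - rewrite sqrt_mul_sq by (specialize (Hbn x y); lra). unfold edge_energy; simpl.
      specialize (H2 x y); specialize (Hbn x y). nra.
    - rewrite sqrt_mul_sq by (specialize (Hc x); specialize (Hm x); lra). unfold pot_energy.
      specialize (H1 x); specialize (Hc x); specialize (Hm x). nra. }
  assert (HD : DR g) by (eapply summable_nonneg_dom; [exact Hdom| exists (/2 * s1 + (s2 + s3)); auto]).
  split; auto. unfold NR, ip. eapply Rle_trans.
  - eapply has_sum_le; [|apply sumv_spec; exact HD|exact HH]. intros; apply Hdom.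
  - lra.
Qed.

Lemma Cn2 a b' : Cnorm2 (a, b') = a * a + b' * b'.
Proof. reflexivity. Qed.

Lemma cpx_build f g : DR f -> DR g -> exists s1 s2 s3,
  has_sum (edge_energy b (fun x => (f x, g x))) s1 /\
  has_sum (pot_energy c (fun x => (f x, g x))) s2 /\
  has_sum (fun x => Cnorm2 (f x, g x) * m x) s3 /\ 1/2 * s1 + s2 + s3 = NR f + NR g.
Proof.
  intros Hf Hg.
  set (A := fun i => Tm f i * Tm f i + Tm g i * Tm g i).
  assert (HA : has_sum A (NR f + NR g)) by (apply has_sum_plus; apply sumv_spec; auto).
  destruct (has_sum_split A _ (fun i => ltac:(unfold A; pose proof (Rle_0_sqr (Tm f i)); pose proof (Rle_0_sqr (Tm g i)); unfold Rsqr in *; lra)) HA)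
    as [a1 [a2 [Ha1 [Ha2 Hs]]]].
  assert (Hr : forall x, A (inr x) = (c x + m x) * (f x * f x + g x * g x)).
  { intros x; unfold A; simpl. rewrite !sqrt_mul_sq by (specialize (Hc x); specialize (Hm x); lra). ring. }
  destruct (summable_nonneg_dom (fun x => A (inr x)) (pot_energy c (fun x => (f x, g x)))) as [s2 E2].
  { intros x. cbv beta. rewrite Hr. unfold pot_energy; rewrite Cn2. specialize (Hc x); specialize (Hm x).
    pose proof (Rle_0_sqr (f x)); pose proof (Rle_0_sqr (g x)); unfold Rsqr in *; split; nra. }
  { exists a2; auto. }
  destruct (summable_nonneg_dom (fun x => A (inr x)) (fun x => Cnorm2 (f x, g x) * m x)) as [s3 E3].
  { intros x. cbv beta. rewrite Hr. rewrite Cn2. specialize (Hc x); specialize (Hm x).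
    pose proof (Rle_0_sqr (f x)); pose proof (Rle_0_sqr (g x)); unfold Rsqr in *; split; nra. }
  { exists a2; auto. }
  exists (2 * a1), s2, s3. split; [|split; [auto|split; [auto|]]].
  - eapply has_sum_ext; [|apply has_sum_scal; exact Ha1]. intros [x y]; unfold A, edge_energy; simpl.
    rewrite !sqrt_mul_sq by (specialize (Hbn x y); lra). unfold Cnorm2, Csub; simpl. field.
  - assert (s2 + s3 = a2).
    { eapply has_sum_unique; [apply has_sum_plus; [exact E2|exact E3]|].
      eapply has_sum_ext; [|exact Ha2]. intros x. cbv beta. rewrite Hr. unfold pot_energy. rewrite Cn2. ring. }
    lra.
Qed.

Ltac cn2tac := intros; unfold Cnorm2, Csub; simpl;
  first [ match goal with |- _ <= _ + ?b * ?b => pose proof (Rle_0_sqr b); unfold Rsqr in *; lra end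
        | match goal with |- _ <= ?b * ?b + _ => pose proof (Rle_0_sqr b); unfold Rsqr in *; lra end ].

Lemma DR_of_DQN u : DQN m b c u -> DR (fun x => fst (u x)) /\ DR (fun x => snd (u x)).
Proof.
  intros [[s3 E3] [[s1 E1] [s2 E2]]]. split.
  - eapply cpx_part; eauto; cn2tac.
  - eapply cpx_part; eauto; cn2tac.
Qed.

Definition approx (f : V -> R) := forall eps, 0 < eps -> exists phi, finsR phi /\ NR (fun x => f x - phi x) < eps.

Lemma parts_of_DQD u : DQD m b c u -> approx (fun x => fst (u x)) /\ approx (fun x => snd (u x)).
Proof.
  intros [_ H]. split; intros eps He; destruct (H eps He) as [phi [[l Hl] [s1 [s2 [s3 [E1 [E2 [E3 Hlt]]]]]]]].
  - exists (fun x => fst (phi x)). split.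
    + exists l. intros x Hx. rewrite Hl; [reflexivity|auto].
    + edestruct (cpx_part (fun x => Csub (u x) (phi x)) s1 s2 s3 (fun x => fst (u x) - fst (phi x))); eauto; try lra;
      cn2tac.
  - exists (fun x => snd (phi x)). split.
    + exists l. intros x Hx. rewrite Hl; [reflexivity|auto].
    + edestruct (cpx_part (fun x => Csub (u x) (phi x)) s1 s2 s3 (fun x => snd (u x) - snd (phi x))); eauto; try lra;
      cn2tac.
Qed.

Lemma DQD_of_parts u : DQN m b c u -> approx (fun x => fst (u x)) -> approx (fun x => snd (u x)) -> DQD m b c u.
Proof.
  intros HN H1 H2. split; auto. intros eps He.
  destruct (DR_of_DQN u HN) as [D1 D2].
  destruct (H1 (eps/2)) as [p1 [[l1 F1] N1]]; [lra|].
  destruct (H2 (eps/2)) as [p2 [[l2 F2] N2]]; [lra|].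
  exists (fun x => (p1 x, p2 x)). split.
  - exists (l1 ++ l2). intros x Hx. rewrite F1, F2; auto; intro; apply Hx; apply in_or_app; auto.
  - destruct (cpx_build (fun x => fst (u x) - p1 x) (fun x => snd (u x) - p2 x)) as [s1 [s2 [s3 [E1 [E2 [E3 Hs]]]]]].
    + apply DR_minus; auto. apply DR_fins; auto. exists l1; auto.
    + apply DR_minus; auto. apply DR_fins; auto. exists l2; auto.
    + exists s1, s2, s3. split; [exact E1|split; [exact E2|split; [exact E3|lra]]].
Qed.


Lemma Tm_contr (rho : R -> R) g i :
  (forall a b', (rho a - rho b') * (rho a - rho b') <= (a - b') * (a - b')) ->
  (forall a, rho a * rho a <= a * a) ->
  0 <= Tm (fun x => rho (g x)) i * Tm (fun x => rho (g x)) i <= Tm g i * Tm g i.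
Proof.
  intros H1 H2. split; [apply Rle_0_sqr|]. destruct i as [[x y]|x]; simpl.
  - rewrite !sqrt_mul_sq by (specialize (Hbn x y); lra). specialize (Hbn x y). specialize (H1 (g x) (g y)). nra.
  - rewrite !sqrt_mul_sq by (specialize (Hc x); specialize (Hm x); lra). specialize (Hc x); specialize (Hm x).
    specialize (H2 (g x)). nra.
Qed.

Lemma DR_contr (rho : R -> R) g :
  (forall a b', (rho a - rho b') * (rho a - rho b') <= (a - b') * (a - b')) ->
  (forall a, rho a * rho a <= a * a) ->
  DR g -> DR (fun x => rho (g x)) /\ NR (fun x => rho (g x)) <= NR g.
Proof.
  intros H1 H2 Hg. assert (D : DR (fun x => rho (g x))).
  { eapply summable_nonneg_dom; [|exact Hg]. intros i; apply Tm_contr; auto. }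
  split; auto. unfold NR, ip. apply sumv_le; auto. intros i; apply Tm_contr; auto.
Qed.

Definition notapprox (f : V -> R) := exists eps0, 0 < eps0 /\ forall phi, finsR phi -> eps0 <= NR (fun x => f x - phi x).

Lemma NR_ext f g : (forall x, f x = g x) -> NR f = NR g.
Proof. intros H. replace g with f; auto. apply functional_extensionality; auto. Qed.

Lemma finsR_lin p q (f g : V -> R) : finsR f -> finsR g -> finsR (fun x => p * f x + q * g x).
Proof. intros [l1 H1] [l2 H2]. exists (l1 ++ l2). intros x Hx. rewrite H1, H2. ring.
  all: intro; apply Hx; apply in_or_app; auto. Qed.

Lemma trunc v : DR v -> notapprox v -> exists n, 0 <= n /\ notapprox (fun x => clip n (v x)).
Proof.
  intros Hv [eps0 [He0 Hna]]. apply NNPP; intro Hno.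
  set (eps := eps0).
  set (A := fun i => Tm v i * Tm v i).
  assert (HA : has_sum A (NR v)) by (apply sumv_spec; exact Hv).
  destruct (HA (eps/4)) as [l0 [Hl0 Hl0']]; [unfold eps; lra|].
  assert (Hfl0 := Hl0' l0 Hl0 (incl_refl _)). apply Rabs_def2 in Hfl0.
  set (pa := fun i : (V*V)+V => match i with inl p => Rabs (v (fst p)) + Rabs (v (snd p)) | inr x => Rabs (v x) end).
  assert (Hpa : forall i, 0 <= pa i).
  { intros [p|x]; simpl; [pose proof (Rabs_pos (v (fst p))); pose proof (Rabs_pos (v (snd p))); lra| apply Rabs_pos]. }
  set (n := fsum pa l0).
  assert (Hn : 0 <= n) by (apply fsum_nonneg; auto).
  set (h := fun x => v x - clip n (v x)).
  assert (Hh : DR h /\ NR h <= NR v).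
  { apply (DR_contr (fun a => a - clip n a)); auto; intros; [apply rest_lip|apply rest_sq]; auto. }
  assert (Hr : forall x, Rabs (v x) <= n -> h x = 0).
  { intros x Hx. unfold h. rewrite clip_id; [ring|]. revert Hx; split_Rabs; intros; split; lra. }
  assert (Hz : forall i, In i l0 -> Tm h i = 0).
  { intros i Hi. assert (Hle := fsum_In_le pa l0 i Hpa Hi). fold n in Hle.
    destruct i as [[x y]|x]; simpl in *.
    - pose proof (Rabs_pos (v x)); pose proof (Rabs_pos (v y)).
      rewrite (Hr x), (Hr y) by lra. ring.
    - rewrite (Hr x) by lra. ring. }
  assert (Hhb : NR h <= NR v - fsum A l0).
  { unfold NR at 1, ip. eapply has_sum_le_bound; [apply sumv_spec; apply Hh|].
    intros l Hl. destruct (nodup_cover (l ++ l0)) as [l' [Hl' Hinc]].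
    assert (Hnn : forall i, 0 <= Tm h i * Tm h i) by (intros; apply Rle_0_sqr).
    assert (X1 : fsum (fun i => Tm h i * Tm h i) l <= fsum (fun i => Tm h i * Tm h i) l').
    { apply fsum_incl_le; auto. intros x Hx; apply Hinc, in_or_app; auto. }
    destruct (incl_perm l0 l' Hl0 Hl') as [r Hperm]. { intros x Hx; apply Hinc, in_or_app; auto. }
    rewrite (fsum_perm _ _ _ Hperm), fsum_app in X1.
    rewrite (fsum_zero _ l0) in X1 by (intros i Hi; rewrite Hz; auto; ring).
    assert (X2 : fsum (fun i => Tm h i * Tm h i) r <= fsum A r).
    { apply fsum_le. intros i. unfold A, h. apply (Tm_contr (fun a => a - clip n a)); intros; [apply rest_lip|apply rest_sq]; auto. }
    assert (X3 : fsum A l' <= NR v) by (apply has_sum_bound; auto; intros; apply Rle_0_sqr).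
    rewrite (fsum_perm _ _ _ Hperm), fsum_app in X3. lra. }
  assert (Hap : exists phi, finsR phi /\ NR (fun x => clip n (v x) - phi x) < eps / 4).
  { apply NNPP; intro Hn'. apply Hno. exists n; split; auto. exists (eps/4); split; [unfold eps; lra|].
    intros phi Hp. apply Rnot_lt_le; intro Hlt. apply Hn'; eauto. }
  destruct Hap as [phi [Hp Hlt]].
  assert (Hcd : DR (fun x => clip n (v x) - phi x)).
  { apply DR_minus; auto. apply (DR_contr (clip n)); auto; intros; [apply clip_lip|apply clip_sq]; auto.
    apply DR_fins; auto. }
  assert (E : Tm (fun x => v x - phi x) = fun i => Tm h i + Tm (fun x => clip n (v x) - phi x) i).
  { apply functional_extensionality; intros [[x y]|x]; unfold h; simpl; ring. }
  assert (Hs := ip_sum_le _ _ (proj1 Hh) Hcd). rewrite <- E in Hs.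
  specialize (Hna phi Hp). unfold NR in *. unfold eps in *. lra.
Qed.


Lemma minim v n : DR v -> 0 <= n -> (forall x, -n <= v x <= n) -> notapprox v ->
  exists w, DR w /\ (forall x, -n <= w x <= n) /\ (exists x, w x <> 0) /\
    (forall x s, has_sum (fun y => b x y * (w x - w y)) s -> s + (c x + m x) * w x = 0).
Proof.
  intros Hv Hn Hvb [eps0 [He0 Hna]].
  set (E := fun r => exists phi, finsR phi /\ r = - NR (fun x => v x - phi x)).
  destruct (completeness E) as [L [Hub Hlub]].
  { exists 0. intros r [phi [_ ->]]. pose proof (ip_nonneg (Tm (fun x => v x - phi x))). unfold NR; lra. }
  { exists (- NR (fun x => v x - 0)), (fun _ => 0). split; auto. exists []; auto. }
  set (d2 := - L).
  assert (Hlow : forall phi, finsR phi -> d2 <= NR (fun x => v x - phi x)).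
  { intros phi Hp. assert (- NR (fun x => v x - phi x) <= L) by (apply Hub; exists phi; auto). unfold d2; lra. }
  assert (Happ : forall e, 0 < e -> exists phi, finsR phi /\ NR (fun x => v x - phi x) < d2 + e).
  { intros e He. apply NNPP; intro Hn'. assert (L <= L - e); [|lra]. apply Hlub.
    intros r [phi [Hp ->]]. apply Rnot_lt_le; intro Hlt. apply Hn'. exists phi; split; auto. unfold d2; lra. }
  assert (Hclip : forall e, 0 < e -> exists phi, finsR phi /\ NR (fun x => v x - phi x) < d2 + e /\
            forall x, -n <= v x - phi x <= n).
  { intros e He. destruct (Happ e He) as [phi [Hp Hlt]].
    exists (fun x => v x - clip n (v x - phi x)). split; [|split].
    - destruct Hp as [l Hl]. exists l. intros x Hx. rewrite Hl by auto. rewrite Rminus_0_r, clip_id; auto. ring.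
    - rewrite (NR_ext _ (fun x => clip n (v x - phi x))) by (intros; ring).
      destruct (DR_contr (clip n) (fun x => v x - phi x)) as [_ H].
      + intros; apply clip_lip; auto.
      + intros; apply clip_sq; auto.
      + apply DR_minus; auto. apply DR_fins; auto.
      + lra.
    - intros x. replace (v x - (v x - clip n (v x - phi x))) with (clip n (v x - phi x)) by ring. apply clip_bd; auto. }
  assert (Hch : forall k : nat, {phi | finsR phi /\ NR (fun x => v x - phi x) < d2 + epsk k /\
            forall x, -n <= v x - phi x <= n}).
  { intros k. apply constructive_indefinite_description. apply Hclip. apply epsk_pos. }
  set (phi := fun k => proj1_sig (Hch k)).
  assert (Hphi : forall k, finsR (phi k)) by (intros k; apply (proj2_sig (Hch k))).
  assert (HphiN : forall k, NR (fun x => v x - phi k x) < d2 + epsk k) by (intros k; apply (proj2_sig (Hch k))).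
  assert (Hphib : forall k x, -n <= v x - phi k x <= n) by (intros k; apply (proj2_sig (Hch k))).
  clearbody phi. clear Hch.
  set (f := fun k x => v x - phi k x).
  assert (Df : forall k, DR (f k)) by (intros k; apply DR_minus; auto; apply DR_fins; auto).
  assert (Hcau : forall k j, NR (fun x => f k x - f j x) <= 2 * epsk k + 2 * epsk j).
  { intros k j. set (F := Tm (f k)). set (G := Tm (f j)).
    assert (LF : L2 F) by apply Df. assert (LG : L2 G) by apply Df.
    assert (Hh := Hlow (fun x => /2 * phi k x + /2 * phi j x) (finsR_lin _ _ _ _ (Hphi k) (Hphi j))).
    rewrite (NR_ext _ (fun x => /2 * f k x + /2 * f j x)) in Hh by (intros; unfold f; field).
    unfold NR in Hh. rewrite Tm_lin in Hh. fold F G in Hh.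
    rewrite ip_lin_l, !ip_lin_r in Hh by first [exact LF | exact LG | apply L2_lin; auto].
    rewrite (NR_ext _ (fun x => 1 * f k x + (-1) * f j x)) by (intros; ring).
    unfold NR. rewrite Tm_lin. fold F G.
    rewrite ip_lin_l, !ip_lin_r by first [exact LF | exact LG | apply L2_lin; auto].
    rewrite (ip_comm G F) in *.
    assert (HF := HphiN k). assert (HG := HphiN j). fold (f k) (f j) in HF, HG. unfold NR in HF, HG. fold F G in HF, HG.
    lra. }
  assert (Hcx : forall x, Cauchy_crit (fun k => f k x)).
  { intros x e He. assert (Hmx := Hm x).
    destruct (epsk_small (e * e * m x / 4)) as [N HN].
    { apply Rdiv_lt_0_compat; [|lra]. apply Rmult_lt_0_compat; [nra|lra]. }
    exists N. intros k j Hk Hj. unfold R_dist.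
    assert (P := NR_point (fun y => f k y - f j y) x (DR_minus _ _ (Df k) (Df j))).
    assert (Q := Hcau k j). assert (Ek := HN k ltac:(lia)). assert (Ej := HN j ltac:(lia)).
    assert (S : (f k x - f j x) * (f k x - f j x) < e * e).
    { assert (m x * ((f k x - f j x) * (f k x - f j x)) < m x * (e * e)) by lra.
      apply Rmult_lt_reg_l with (m x); auto. }
    apply Rabs_def1; nra. }
  set (w := fun x => proj1_sig (R_complete _ (Hcx x))).
  assert (Hw : forall x, Un_cv (fun k => f k x) (w x)) by (intros x; unfold w; apply (proj2_sig (R_complete _ (Hcx x)))).
  clearbody w.
  assert (Hfat : forall j, DR (fun x => w x - f j x) /\ NR (fun x => w x - f j x) <= 2 * epsk j).
  { intros j. unfold DR, NR.
    apply (fatou (fun k => Tm (fun x => f k x - f j x)) _ (2 * epsk j) (fun k => 2 * epsk k + 2 * epsk j)).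
    - intros k. apply DR_minus; auto.
    - intros [[x y]|x]; simpl.
      + apply cv_scal. apply CV_minus; apply CV_minus; auto; apply cv_const.
      + apply cv_scal. apply CV_minus; auto; apply cv_const.
    - intros k. apply Hcau.
    - assert (C := CV_plus _ _ _ _ (cv_scal 2 _ _ epsk_cv) (cv_const (2 * epsk j))).
      rewrite Rmult_0_r, Rplus_0_l in C. exact C. }
  assert (Dw : DR w).
  { assert (H := DR_lin (fun x => w x - f 0%nat x) (f 0%nat) 1 1 (proj1 (Hfat 0%nat)) (Df 0%nat)).
    unfold DR in *. rewrite (Tm_ext _ w) in H by (intros; ring). exact H. }
  assert (Hwb : forall x, -n <= w x <= n).
  { intros x. split.
    - apply Rle_cv_lim with (Un := fun _ => -n) (Vn := fun k => f k x); [intros k; unfold f; apply (proj1 (Hphib k x)) | apply cv_const | apply Hw].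
    - apply Rle_cv_lim with (Un := fun k => f k x) (Vn := fun _ => n); [intros k; unfold f; apply (proj2 (Hphib k x)) | apply Hw | apply cv_const]. }
  assert (Hnz : exists x, w x <> 0).
  { apply NNPP; intro Hz. assert (Hz' : forall x, w x = 0) by (intros x; apply NNPP; intro; apply Hz; eauto).
    destruct (epsk_small (eps0 / 2)) as [N HN]; [lra|].
    destruct (Hfat N) as [_ HN2]. specialize (HN N (le_n N)).
    assert (NR (fun x => w x - f N x) = NR (f N)).
    { unfold NR. rewrite (Tm_ext _ (fun x => (-1) * f N x + 0 * f N x)) by (intros; rewrite Hz'; ring).
      rewrite Tm_lin. unfold ip. f_equal. apply functional_extensionality; intros; ring. }
    specialize (Hna (phi N) (Hphi N)). change (NR (fun x => v x - phi N x)) with (NR (f N)) in Hna. lra. }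
  assert (Horth : forall psi, finsR psi -> ip (Tm w) (Tm psi) = 0).
  { intros psi Hpsi. assert (Dpsi := DR_fins psi Hpsi).
    set (p := ip (Tm w) (Tm psi)). set (B := NR psi).
    assert (HB : 0 <= B) by apply ip_nonneg.
    apply NNPP; intro Hp0.
    assert (Hpp : 0 < p * p) by (assert (p <> 0) by auto; nra).
    destruct (epsk_small (p * p / (32 * (B + 1)))) as [j Hj]. { apply Rdiv_lt_0_compat; lra. }
    specialize (Hj j (le_n j)). assert (Hej := epsk_pos j).
    set (pj := ip (Tm (f j)) (Tm psi)).
    assert (LF : L2 (Tm (f j))) by apply Df.
    assert (Ha : forall t, d2 <= NR (f j) - 2 * t * pj + t * t * B).
    { intros t. assert (H := Hlow (fun x => 1 * phi j x + t * psi x) (finsR_lin 1 t _ _ (Hphi j) Hpsi)).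
      rewrite (NR_ext _ (fun x => 1 * f j x + (-t) * psi x)) in H by (intros; unfold f; ring).
      unfold NR in H. rewrite Tm_lin in H.
      rewrite ip_lin_l, !ip_lin_r in H by first [exact LF | exact Dpsi | apply L2_lin; auto].
      rewrite (ip_comm (Tm psi) (Tm (f j))) in H. unfold pj, B, NR.
      replace (ip (Tm (f j)) (Tm (f j)) - 2 * t * ip (Tm (f j)) (Tm psi) + t * t * ip (Tm psi) (Tm psi))
        with (1 * (1 * ip (Tm (f j)) (Tm (f j)) + - t * ip (Tm (f j)) (Tm psi)) +
              - t * (1 * ip (Tm (f j)) (Tm psi) + - t * ip (Tm psi) (Tm psi))) by ring.
      exact H. }
    assert (Hb : NR (f j) < d2 + epsk j) by apply HphiN.
    assert (Hc' : (p - pj) * (p - pj) <= 2 * epsk j * B).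
    { destruct (Hfat j) as [Dj Nj].
      assert (Epj : p - pj = ip (Tm (fun x => w x - f j x)) (Tm psi)).
      { rewrite (Tm_ext (fun x => w x - f j x) (fun x => 1 * w x + (-1) * f j x)) by (intros; ring).
        rewrite Tm_lin, ip_lin_l by auto. unfold p, pj; ring. }
      rewrite Epj. eapply Rle_trans; [apply cauchy_schwarz; auto|].
      fold B. apply Rmult_le_compat_r; auto. }
    set (q := B + 1). assert (Hq : 0 < q) by (unfold q; lra).
    set (ej := epsk j) in *.
    set (t := p / q).
    assert (I1 : 0 < -2 * t * pj + t * t * B + ej) by (specialize (Ha t); lra).
    assert (I2 : q * q * (-2 * t * pj + t * t * B + ej) = -2 * p * pj * q + p * p * B + ej * q * q)
      by (unfold t; field; lra).
    assert (I3 : 0 < -2 * p * pj * q + p * p * B + ej * q * q) by (rewrite <- I2; apply Rmult_lt_0_compat; nra).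
    assert (Hjq : ej * q < p * p / 32).
    { unfold q. apply (Rmult_lt_compat_r (32 * (B + 1))) in Hj; [|lra].
      replace (p * p / (32 * (B + 1)) * (32 * (B + 1))) with (p * p) in Hj by (field; lra). lra. }
    set (e := p - pj) in *.
    assert (He2 : e * e < p * p / 16).
    { assert (2 * ej * B <= 2 * ej * q) by (unfold q; nra). lra. }
    assert (H2pe : 2 * p * e < p * p / 2).
    { assert (0 <= (2 * e - p / 2) * (2 * e - p / 2)) by apply Rle_0_sqr. nra. }
    assert (Hpj : pj = p - e) by (unfold e; ring).
    rewrite Hpj in I3. assert (HBq : B = q - 1) by (unfold q; ring). rewrite HBq in I3.
    assert (X : 2 * p * e * q < p * p / 2 * q) by (apply Rmult_lt_compat_r; auto).
    assert (Y : ej * q * q < p * p / 32 * q) by (apply Rmult_lt_compat_r; auto).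
    assert (Z : 0 < p * p * q) by (apply Rmult_lt_0_compat; auto).
    lra. }
  exists w. split; [auto|split; [auto|split; [auto|]]].
  intros x s Hs. rewrite <- (Horth (dl x)).
  - unfold ip. symmetry. apply sumv_eq. apply ip_delta; auto.
  - exists [x]. intros y Hy. unfold dl. destruct (ceq y x); auto. subst; simpl in Hy; tauto.
Qed.



Lemma main_sec :
  ((exists u, DQN m b c u /\ ~ DQD m b c u) <->
   (exists u, DQN m b c u /\ not_identically_zero u /\ Lt_plus1_zero m b c u)) /\
  ((exists u, DQN m b c u /\ not_identically_zero u /\ Lt_plus1_zero m b c u) <->
   (exists u, DQN m b c u /\ in_linfty u /\ not_identically_zero u /\ Lt_plus1_zero m b c u)).
Proof.
  assert (AC : (exists u, DQN m b c u /\ ~ DQD m b c u) ->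
     exists u, DQN m b c u /\ in_linfty u /\ not_identically_zero u /\ Lt_plus1_zero m b c u).
  { intros [u [HN HD]].
    destruct (DR_of_DQN u HN) as [D1 D2].
    assert (Hv : exists v, DR v /\ notapprox v).
    { apply NNPP; intro Hn. apply HD. apply DQD_of_parts; auto.
      - intros eps He. apply NNPP; intro Hx. apply Hn. exists (fun x => fst (u x)). split; auto.
        exists eps. split; auto. intros phi Hp. apply Rnot_lt_le; intro; apply Hx; eauto.
      - intros eps He. apply NNPP; intro Hx. apply Hn. exists (fun x => snd (u x)). split; auto.
        exists eps. split; auto. intros phi Hp. apply Rnot_lt_le; intro; apply Hx; eauto. }
    destruct Hv as [v0 [Dv0 Hna0]].
    destruct (trunc v0 Dv0 Hna0) as [n [Hn Hna]].
    destruct (DR_contr (clip n) v0 (fun a b' => clip_lip n a b' Hn) (fun a => clip_sq n a Hn) Dv0) as [Dv _].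
    destruct (minim (fun x => clip n (v0 x)) n Dv Hn (fun x => clip_bd n _ Hn) Hna) as [w [Dw [Hwb [[x0 Hx0] Heq]]]].
    exists (fun x => (w x, 0)).
    destruct (cpx_build w (fun _ => 0) Dw DR_zero) as [s1 [s2 [s3 [E1 [E2 [E3 _]]]]]].
    assert (Cab : forall x, Cabs (w x, 0) <= n).
    { intros x. unfold Cabs, Cnorm2; simpl. rewrite <- (sqrt_square n Hn). apply sqrt_le_1_alt. specialize (Hwb x). nra. }
    split; [|split; [|split]].
    - split; [exists s3 | split; [exists s1 | exists s2]]; auto.
    - exists n; auto.
    - exists x0. intro H. apply Hx0. injection H; auto.
    - split.
      + intros x. apply summable_dom with (fun y => n * b x y).
        * intros y. rewrite Rabs_mult, Rabs_Rabsolu. rewrite (Rabs_right (Cabs _)) by (apply Rle_ge, sqrt_pos).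
          rewrite Rabs_right by (apply Rle_ge; auto). specialize (Cab y); specialize (Hbn x y).
          pose proof (sqrt_pos (Cnorm2 (w y, 0))). unfold Cabs in *. nra.
        * apply summable_scal; auto.
      + intros x. destruct (summable_dom (fun y => 2 * n * b x y) (fun y => b x y * (w x - w y))) as [sr Hsr].
        { intros y. rewrite Rabs_mult, (Rabs_right (b x y)) by (apply Rle_ge; auto).
          pose proof (Hwb x); pose proof (Hwb y). specialize (Hbn x y).
          assert (Rabs (w x - w y) <= 2 * n) by (split_Rabs; lra). pose proof (Rabs_pos (w x - w y)). nra. }
        { apply summable_scal; auto. }
        exists sr, 0. simpl. split; [exact Hsr|split; [|split]].
        * eapply has_sum_ext; [|apply has_sum_zero]. intros; simpl; ring.
        * specialize (Heq x sr Hsr). assert (Hmx := Hm x).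
          replace ((sr + c x * w x) / m x + w x) with ((sr + (c x + m x) * w x) / m x) by (field; lra).
          rewrite Heq. unfold Rdiv; ring.
        * unfold Rdiv; ring. }
  assert (BA : (exists u, DQN m b c u /\ not_identically_zero u /\ Lt_plus1_zero m b c u) ->
     exists u, DQN m b c u /\ ~ DQD m b c u).
  { intros [u [HN [[x0 Hx0] [_ Heq]]]]. exists u. split; auto. intro HD.
    destruct (parts_of_DQD u HD) as [A1 A2]. destruct (DR_of_DQN u HN) as [D1 D2].
    assert (Z1 : forall x, fst (u x) = 0).
    { apply zero_real; auto. intros x. destruct (Heq x) as [sr [si [H1 [H2 [H3 H4]]]]]. exists sr; auto. }
    assert (Z2 : forall x, snd (u x) = 0).
    { apply zero_real; auto. intros x. destruct (Heq x) as [sr [si [H1 [H2 [H3 H4]]]]]. exists si; auto. }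
    apply Hx0. specialize (Z1 x0); specialize (Z2 x0). destruct (u x0) as [a b']. simpl in *. subst. reflexivity. }
  split; split.
  - intros H. destruct (AC H) as [u [H1 [_ [H3 H4]]]]. exists u; auto.
  - exact BA.
  - intros H. apply AC, BA, H.
  - intros [u [H1 [_ [H3 H4]]]]. exists u; auto.
Qed.

End Graph.


Theorem mainTheorem9
  (V : Type)
  (Vcount : exists enc : V -> nat, forall x y, enc x = enc y -> x = y)
  (m : V -> R) (Hm : forall x, 0 < m x)
  (b : V -> V -> R) (c : V -> R)
  (Hc : forall x, 0 <= c x)
  (Hb_nonneg : forall x y, 0 <= b x y)
  (Hb_diag : forall x, b x x = 0)
  (Hb_sym : forall x y, b x y = b y x)
  (Hb_sum : forall x, summable (b x)) :
  ((exists u, DQN m b c u /\ ~ DQD m b c u) <->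
   (exists u, DQN m b c u /\ not_identically_zero u /\ Lt_plus1_zero m b c u)) /\
  ((exists u, DQN m b c u /\ not_identically_zero u /\ Lt_plus1_zero m b c u) <->
   (exists u, DQN m b c u /\ in_linfty u /\ not_identically_zero u /\ Lt_plus1_zero m b c u)).
Proof.
  eapply main_sec; eauto.
Qed.
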